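(* Let $P$ be a proper Poisson prime ideal of $A$. Then for each $i=1,\dots,n-2$, either $s_i\notin P$ or $t_i\notin P$.
   Context: Let $n\ge 3$, $A=\mathbb{C}[x_1,\dots,x_n]$. Fix $s_1,t_1,\dots,s_{n-2},t_{n-2}\in A$ with each $t_i\ne 0$ and $s_i,t_i$ coprime, such that $s_1/t_1,\dots,s_{n-2}/t_{n-2}$ are algebraically independent over $\mathbb{C}$. $A$ carries the Poisson bracket $\{f,g\}=(t_1\cdots t_{n-2})^2\,\mathrm{Jac}(f,g,s_1/t_1,\dots,s_{n-2}/t_{n-2})$, where $\mathrm{Jac}$ denotes the Jacobian determinant (rows = gradients with respect to $x_1,\dots,x_n$). A Poisson prime ideal is a prime ideal $P$ with $\{P,A\}\subseteq P$; it is residually null if $\{a,b\}\in P$ for all $a,b\in A$, and proper if it is not residually null. *)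

(* Defs.v *)
From HB Require Import structures.
From mathcomp Require Import all_boot all_order all_algebra.
From mathcomp Require Import ring_quotient fraction.
From mathcomp Require Import Rstruct.
From mathcomp Require Import complex.
From mathcomp Require Import mpoly.

Set Implicit Arguments.
Unset Strict Implicit.
Unset Printing Implicit Defensive.

Import GRing.Theory.
Local Open Scope ring_scope.

Notation CC := (complex Rdefinitions.R).

Notation Apoly n := {mpoly CC[n]}.

Definition mdvd n (d p : Apoly n) : Prop := exists q : Apoly n, p = d * q.

Definition mcoprime n (s t : Apoly n) : Prop :=
  forall d : Apoly n, mdvd d s -> mdvd d t -> exists c : CC, c != 0 /\ d = c%:MP.

Definition alg_indep_fracs n m (s t : 'I_m -> Apoly n) : Prop :=
  forall Q : {mpoly CC[m]}, Q != 0 ->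
    mmap (fun c : CC => tofrac (c%:MP : Apoly n))
         (fun k : 'I_m => tofrac (s k) / tofrac (t k)) Q != 0.

(* Row i of the Jacobian-type matrix, entry in column j (the derivative d/dx_j):
   row 0 = grad f, row 1 = grad g, row k+2 = t_k^2 * grad (s_k/t_k)
   = t_k grad s_k - s_k grad t_k  (k < n-2). *)
Definition poisson_row n (s t : 'I_(n - 2) -> Apoly n) (f g : Apoly n)
  (i j : 'I_n) : Apoly n :=
  if (nat_of_ord i == 0)%N then mderiv j f
  else if (nat_of_ord i == 1)%N then mderiv j g
  else match (insub (nat_of_ord i - 2)%N : option 'I_(n - 2)) with
       | Some k => t k * mderiv j (s k) - s k * mderiv j (t k)
       | None => 0
       end.

(* {f,g} = (t_1...t_{n-2})^2 Jac(f, g, s_1/t_1, ..., s_{n-2}/t_{n-2});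
   by multilinearity of the determinant in its rows this is the polynomial
   det of the matrix above. *)
Definition pbracket n (s t : 'I_(n - 2) -> Apoly n) (f g : Apoly n) : Apoly n :=
  \det (\matrix_(i < n, j < n) poisson_row s t f g i j).

Definition poisson_prime n (s t : 'I_(n - 2) -> Apoly n) (P : {pred Apoly n}) : Prop :=
  [/\ idealr_closed P, prime_idealr_closed P &
      forall a b : Apoly n, a \in P -> pbracket s t a b \in P].

Definition residually_null n (s t : 'I_(n - 2) -> Apoly n) (P : {pred Apoly n}) : Prop :=
  forall a b : Apoly n, pbracket s t a b \in P.

Definition proper_poisson n (s t : 'I_(n - 2) -> Apoly n) (P : {pred Apoly n}) : Prop :=
  poisson_prime s t P /\ ~ residually_null s t P.

(* Main.v *)
Require Import Defs.
From mathcomp Require Import all_boot all_algebra.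
From mathcomp Require Import ring_quotient fraction Rstruct complex mpoly.
Import GRing.Theory.
Local Open Scope ring_scope.

Theorem lemma2p12 (n : nat) (s t : 'I_(n - 2) -> Apoly n) :
  (3 <= n)%N ->
  (forall i, t i != 0) ->
  (forall i, mcoprime (s i) (t i)) ->
  alg_indep_fracs s t ->
  forall P : {pred Apoly n}, proper_poisson s t P ->
  forall i : 'I_(n - 2), s i \notin P \/ t i \notin P.
Proof.
move=> n3 _ _ _ P [[[P0 P1 PI] _ _] nres] i.
have PM : forall a u, u \in P -> a * u \in P.
  by move=> a u uP; rewrite -[_ * _]addr0; apply: PI.
have PD : forall u v, u \in P -> v \in P -> u + v \in P.
  by move=> u v uP vP; rewrite -[u]mul1r; apply: PI.
have [Hs|Hs] := boolP (s i \in P); last by left.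
have [Ht|Ht] := boolP (t i \in P); last by right.
exfalso; apply: nres => a b.
have ltr : (i + 2 < n)%N.
  by have := ltn_ord i; rewrite ltn_subRL addnC.
set r := Ordinal ltr.
rewrite /pbracket (expand_det_row _ r).
apply: (big_ind (fun x => x \in P)) => //.
move=> j _; rewrite mxE mulrC; apply: (PM _ _).
rewrite /poisson_row /=.
have -> : (i + 2 - 2)%N = i by rewrite addnK.
rewrite valK.
idtac.
rewrite addn2 /=.
apply: PD; first by rewrite mulrC PM.
by rewrite mulrC -mulNr PM.
Qed.
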